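(* Let $L\dashv R:\mathcal{D}\rightleftarrows\mathcal{C}$ be an adjunction (with $L:\mathcal{D}\to\mathcal{C}$, unit $\eta$) where $\mathcal{D}$ is cartesian. Let $W$ be an object of $\mathcal{D}$ such that the counit of the sliced adjunction $L_W\dashv R_W:\mathcal{D}/W\rightleftarrows\mathcal{C}/LW$ is an isomorphism (so $L_WR_W\cong \mathrm{Id}_{\mathcal{C}/LW}$). Assume that for every object $X_\phi$ (i.e. $\phi:X\to LW$) of $\mathcal{C}/LW$, the unit $\eta^W$ of $L_W\dashv R_W$ is an isomorphism at the object $W^*\Sigma_WR_W(X_\phi)$. Then for any object $V_f$ (i.e. $f:V\to W$) of $\mathcal{D}/W$, $\eta^W_{W^*V}$ is an isomorphism if and only if $\eta^W_{V_f}$ is an isomorphism.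
   Context: Sliced adjunction at an object $W$ of $\mathcal{D}$: $L_W:\mathcal{D}/W\to\mathcal{C}/LW$ sends $g:V\to W$ to $Lg:LV\to LW$, and $R_W:\mathcal{C}/LW\to\mathcal{D}/W$ sends $h:Z\to LW$ to the pullback of $Rh:RZ\to RLW$ along the unit $\eta_W:W\to RLW$ (as an object over $W$). $\eta^W$ denotes the unit of $L_W\dashv R_W$. $\Sigma_W:\mathcal{D}/W\to\mathcal{D}$ is the forgetful functor (taking the domain), and $W^*:\mathcal{D}\to\mathcal{D}/W$ sends $A$ to the projection $\pi_1:W\times A\to W$; thus $W^*V$ is $\pi_1:W\times V\to W$. *)

(* Defs.v *)
Set Implicit Arguments.
Unset Strict Implicit.

Record Category := {
  ob :> Type;
  hom : ob -> ob -> Type;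
  idm : forall a, hom a a;
  comp : forall x y z, hom y z -> hom x y -> hom x z;
  comp_idl : forall a b (f : hom a b), comp (idm b) f = f;
  comp_idr : forall a b (f : hom a b), comp f (idm a) = f;
  comp_assoc : forall a b c d (f : hom a b) (g : hom b c) (h : hom c d),
      comp h (comp g f) = comp (comp h g) f
}.
Arguments hom {c} _ _ : rename.
Arguments idm {c} _ : rename.
Arguments comp {c x y z} _ _ : rename.
Notation "g ∘ f" := (comp g f) (at level 40, left associativity).

Record Functor (C D : Category) := {
  fobj : C -> D;
  fmap : forall a b, hom a b -> hom (fobj a) (fobj b);
  fmap_id : forall a, fmap (idm a) = idm (fobj a);
  fmap_comp : forall a b c (f : hom a b) (g : hom b c),
      fmap (g ∘ f) = fmap g ∘ fmap f
}.
Arguments fobj {C D} _ _.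
Arguments fmap {C D} _ {a b} _.

Record Adjunction (D C : Category) (L : Functor D C) (R : Functor C D) := {
  unit : forall X : D, hom X (fobj R (fobj L X));
  counit : forall Z : C, hom (fobj L (fobj R Z)) Z;
  unit_nat : forall X Y (f : hom X Y),
      fmap R (fmap L f) ∘ unit X = unit Y ∘ f;
  counit_nat : forall Z Z' (g : hom Z Z'),
      g ∘ counit Z = counit Z' ∘ fmap L (fmap R g);
  triangle_L : forall X : D, counit (fobj L X) ∘ fmap L (unit X) = idm _;
  triangle_R : forall Z : C, fmap R (counit Z) ∘ unit (fobj R Z) = idm _
}.
Arguments unit {D C L R} _ _.
Arguments counit {D C L R} _ _.

Record BinProducts (C : Category) := {
  prod : C -> C -> C;
  pr1 : forall a b, hom (prod a b) a;
  pr2 : forall a b, hom (prod a b) b;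
  pairm : forall x a b, hom x a -> hom x b -> hom x (prod a b);
  pair_pr1 : forall x a b (f : hom x a) (g : hom x b), pr1 a b ∘ pairm f g = f;
  pair_pr2 : forall x a b (f : hom x a) (g : hom x b), pr2 a b ∘ pairm f g = g;
  pair_uniq : forall x a b (f : hom x a) (g : hom x b) (h : hom x (prod a b)),
      pr1 a b ∘ h = f -> pr2 a b ∘ h = g -> h = pairm f g
}.
Arguments prod {C} _ _ _.
Arguments pr1 {C} _ _ _.

Record Terminal (C : Category) := {
  term : C;
  to_term : forall x, hom x term;
  to_term_uniq : forall x (h : hom x term), h = to_term x
}.

Record Cartesian (C : Category) := {
  cart_term : Terminal C;
  cart_prod : BinProducts C
}.

Record Pullbacks (C : Category) := {
  pb : forall a b c, hom a c -> hom b c -> C;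
  pb1 : forall a b c (f : hom a c) (g : hom b c), hom (pb f g) a;
  pb2 : forall a b c (f : hom a c) (g : hom b c), hom (pb f g) b;
  pb_comm : forall a b c (f : hom a c) (g : hom b c), f ∘ pb1 f g = g ∘ pb2 f g;
  pb_pair : forall a b c (f : hom a c) (g : hom b c) x (u : hom x a) (v : hom x b),
      f ∘ u = g ∘ v -> hom x (pb f g);
  pb_pair1 : forall a b c (f : hom a c) (g : hom b c) x (u : hom x a) (v : hom x b)
      (H : f ∘ u = g ∘ v), pb1 f g ∘ pb_pair H = u;
  pb_pair2 : forall a b c (f : hom a c) (g : hom b c) x (u : hom x a) (v : hom x b)
      (H : f ∘ u = g ∘ v), pb2 f g ∘ pb_pair H = v;
  pb_uniq : forall a b c (f : hom a c) (g : hom b c) x (u : hom x a) (v : hom x b)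
      (H : f ∘ u = g ∘ v) (h : hom x (pb f g)),
      pb1 f g ∘ h = u -> pb2 f g ∘ h = v -> h = pb_pair H
}.
Arguments pb {C} _ {a b c} _ _.
Arguments pb1 {C} _ {a b c} _ _.
Arguments pb2 {C} _ {a b c} _ _.
Arguments pb_pair {C} _ {a b c f g x u v} _.

Record SliceOb (C : Category) (W : C) := { sdom : C; sarr : hom sdom W }.
Arguments sdom {C W} _.
Arguments sarr {C W} _.

Definition slice_iso (C : Category) (W : C) (s t : SliceOb W)
  (u : hom (sdom s) (sdom t)) : Prop :=
  sarr t ∘ u = sarr s /\
  exists v : hom (sdom t) (sdom s),
    sarr s ∘ v = sarr t /\ v ∘ u = idm _ /\ u ∘ v = idm _.

(** Sigma_W : D/W -> D is [sdom]; W^* : D -> D/W sends A to pi_1 : W x A -> W. *)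
Definition Wstar (D : Category) (P : BinProducts D) (W : D) (A : D) : SliceOb W :=
  {| sdom := prod P W A; sarr := pr1 P W A |}.

Section Sliced.
Variables (D C : Category) (L : Functor D C) (R : Functor C D)
          (A : Adjunction L R) (PB : Pullbacks D) (W : D).

Definition LW (s : SliceOb W) : SliceOb (fobj L W) :=
  {| sdom := fobj L (sdom s); sarr := fmap L (sarr s) |}.

Definition RW (t : SliceOb (fobj L W)) : SliceOb W :=
  {| sdom := pb PB (fmap R (sarr t)) (unit A W);
     sarr := pb2 PB (fmap R (sarr t)) (unit A W) |}.

(** Unit eta^W of L_W -| R_W at V_f: the map V -> P induced by (eta_V, f). *)
Definition unitW (s : SliceOb W) : hom (sdom s) (sdom (RW (LW s))) :=
  pb_pair PB (unit_nat A (sarr s)).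

Definition counitW (t : SliceOb (fobj L W)) : hom (sdom (LW (RW t))) (sdom t) :=
  counit A (sdom t) ∘ fmap L (pb1 PB (fmap R (sarr t)) (unit A W)).

End Sliced.
Arguments LW {D C} L W s.
Arguments RW {D C L R} A PB W t.
Arguments unitW {D C L R} A PB W s.
Arguments counitW {D C L R} A PB W t.
Arguments slice_iso {C W} s t u.
Arguments Wstar {D} P W A.

(* Main.v *)
Require Import Defs.

Lemma adj_transpose (D C : Category) (L : Functor D C) (R : Functor C D)
  (A : Adjunction L R) (X : D) (Z : C) (h : hom X (fobj R Z)) :
  fmap R (counit A Z ∘ fmap L h) ∘ unit A X = h.
Proof.
  rewrite fmap_comp, <- comp_assoc, unit_nat, comp_assoc, triangle_R, comp_idl.
  reflexivity.
Qed.

Lemma lemT (D C : Category) (L : Functor D C) (R : Functor C D)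
  (A : Adjunction L R) (PB : Pullbacks D) (W : D) (t : SliceOb (fobj L W))
  (X : D) (k1 k2 : hom X (sdom (RW A PB W t))) :
  pb2 PB (fmap R (sarr t)) (unit A W) ∘ k1 = pb2 PB (fmap R (sarr t)) (unit A W) ∘ k2 ->
  counitW A PB W t ∘ fmap L k1 = counitW A PB W t ∘ fmap L k2 -> k1 = k2.
Proof.
  intros E2 Ec.
  assert (E1 : pb1 PB (fmap R (sarr t)) (unit A W) ∘ k2 = pb1 PB (fmap R (sarr t)) (unit A W) ∘ k1).
  { rewrite <- (adj_transpose _ _ _ _ A _ _ (pb1 PB (fmap R (sarr t)) (unit A W) ∘ k1)).
    rewrite <- (adj_transpose _ _ _ _ A _ _ (pb1 PB (fmap R (sarr t)) (unit A W) ∘ k2)).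
    rewrite !(fmap_comp L), !comp_assoc.
    change (fmap R (counitW A PB W t ∘ fmap L k2) ∘ unit A X = fmap R (counitW A PB W t ∘ fmap L k1) ∘ unit A X).
    rewrite Ec. reflexivity. }
  assert (H : fmap R (sarr t) ∘ (pb1 PB (fmap R (sarr t)) (unit A W) ∘ k1)
            = unit A W ∘ (pb2 PB (fmap R (sarr t)) (unit A W) ∘ k1)).
  { rewrite !comp_assoc, pb_comm. reflexivity. }
  transitivity (pb_pair PB H).
  - apply pb_uniq; reflexivity.
  - symmetry. apply pb_uniq; auto.
Qed.

Lemma pb_ext {D : Category} (PB : Pullbacks D) {a b c : D} (f : hom a c) (g : hom b c)
  (X : D) (k1 k2 : hom X (pb PB f g)) :
  pb1 PB f g ∘ k1 = pb1 PB f g ∘ k2 -> pb2 PB f g ∘ k1 = pb2 PB f g ∘ k2 -> k1 = k2.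
Proof.
  intros E1 E2.
  assert (H : f ∘ (pb1 PB f g ∘ k1) = g ∘ (pb2 PB f g ∘ k1)).
  { rewrite !comp_assoc, pb_comm. reflexivity. }
  transitivity (pb_pair PB H).
  - apply pb_uniq; reflexivity.
  - symmetry. apply pb_uniq; auto.
Qed.


Lemma tri {D C : Category} {L : Functor D C} {R : Functor C D}
  (A : Adjunction L R) (PB : Pullbacks D) (W : D) (s : SliceOb W) :
  counitW A PB W (LW L W s) ∘ fmap L (unitW A PB W s) = idm _.
Proof.
  unfold counitW, unitW. simpl.
  rewrite <- comp_assoc, <- fmap_comp, pb_pair1, triangle_L. reflexivity.
Qed.

Lemma Lu_c {D C : Category} {L : Functor D C} {R : Functor C D}
  (A : Adjunction L R) (PB : Pullbacks D) (W : D) (s : SliceOb W)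
  (Hc : slice_iso (LW L W (RW A PB W (LW L W s))) (LW L W s) (counitW A PB W (LW L W s))) :
  fmap L (unitW A PB W s) ∘ counitW A PB W (LW L W s) = idm (fobj L (sdom (RW A PB W (LW L W s)))).
Proof.
  destruct Hc as [_ [v [_ [Hvu Huv]]]].
  assert (E : fmap L (unitW A PB W s) = v).
  { transitivity ((v ∘ counitW A PB W (LW L W s)) ∘ fmap L (unitW A PB W s)).
    - rewrite Hvu. symmetry. apply comp_idl.
    - rewrite <- comp_assoc, tri, comp_idr. reflexivity. }
  rewrite E. exact Hvu.
Qed.

Lemma cancelLu {D C : Category} {L : Functor D C} {R : Functor C D}
  (A : Adjunction L R) (PB : Pullbacks D) (W : D) (s : SliceOb W)
  (Hc : slice_iso (LW L W (RW A PB W (LW L W s))) (LW L W s) (counitW A PB W (LW L W s)))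
  (Z : C) (x y : hom (fobj L (sdom (RW A PB W (LW L W s)))) Z) :
  x ∘ fmap L (unitW A PB W s) = y ∘ fmap L (unitW A PB W s) -> x = y.
Proof.
  intro E.
  rewrite <- (comp_idr x), <- (comp_idr y).
  rewrite <- (Lu_c A PB W s Hc), !comp_assoc, E. reflexivity.
Qed.

Lemma retr_crit {D C : Category} {L : Functor D C} {R : Functor C D}
  (A : Adjunction L R) (PB : Pullbacks D) (W : D) (s : SliceOb W)
  (Hc : slice_iso (LW L W (RW A PB W (LW L W s))) (LW L W s) (counitW A PB W (LW L W s)))
  (r : hom (sdom (RW A PB W (LW L W s))) (sdom s))
  (Hr1 : r ∘ unitW A PB W s = idm _)
  (Hr2 : sarr s ∘ r = sarr (RW A PB W (LW L W s))) :
  slice_iso s (RW A PB W (LW L W s)) (unitW A PB W s).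
Proof.
  split.
  { unfold unitW. simpl. apply pb_pair2. }
  exists r. split; [exact Hr2|]. split; [exact Hr1|].
  apply lemT.
  - rewrite comp_assoc. unfold unitW. simpl. rewrite pb_pair2.
    simpl in Hr2. rewrite Hr2, comp_idr. reflexivity.
  - apply (cancelLu A PB W s Hc).
    rewrite fmap_id, comp_idr.
    transitivity (counitW A PB W (LW L W s) ∘ fmap L ((unitW A PB W s ∘ r) ∘ unitW A PB W s)).
    + rewrite (fmap_comp L (unitW A PB W s) (unitW A PB W s ∘ r)). rewrite comp_assoc. reflexivity.
    + rewrite <- comp_assoc, Hr1, comp_idr. reflexivity.
Qed.

Lemma Pmap_eq {D C : Category} {L : Functor D C} {R : Functor C D}
  (A : Adjunction L R) (PB : Pullbacks D) (W : D) (s s' : SliceOb W)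
  (g : hom (sdom s) (sdom s')) (Hg : sarr s' ∘ g = sarr s) :
  fmap R (fmap L (sarr s')) ∘ (fmap R (fmap L g) ∘ pb1 PB (fmap R (fmap L (sarr s))) (unit A W))
  = unit A W ∘ pb2 PB (fmap R (fmap L (sarr s))) (unit A W).
Proof.
  rewrite comp_assoc, <- !fmap_comp, Hg. apply pb_comm.
Qed.

Definition Pmap {D C : Category} {L : Functor D C} {R : Functor C D}
  (A : Adjunction L R) (PB : Pullbacks D) (W : D) (s s' : SliceOb W)
  (g : hom (sdom s) (sdom s')) (Hg : sarr s' ∘ g = sarr s) :
  hom (sdom (RW A PB W (LW L W s))) (sdom (RW A PB W (LW L W s'))) :=
  pb_pair PB (Pmap_eq A PB W s s' g Hg).

Lemma Pmap_pb2 {D C : Category} {L : Functor D C} {R : Functor C D}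
  (A : Adjunction L R) (PB : Pullbacks D) (W : D) (s s' : SliceOb W)
  (g : hom (sdom s) (sdom s')) (Hg : sarr s' ∘ g = sarr s) :
  sarr (RW A PB W (LW L W s')) ∘ Pmap A PB W s s' g Hg = sarr (RW A PB W (LW L W s)).
Proof. unfold Pmap. simpl. apply pb_pair2. Qed.

Lemma Pmap_nat {D C : Category} {L : Functor D C} {R : Functor C D}
  (A : Adjunction L R) (PB : Pullbacks D) (W : D) (s s' : SliceOb W)
  (g : hom (sdom s) (sdom s')) (Hg : sarr s' ∘ g = sarr s) :
  Pmap A PB W s s' g Hg ∘ unitW A PB W s = unitW A PB W s' ∘ g.
Proof.
  apply pb_ext; unfold Pmap, unitW; simpl.
  - rewrite !comp_assoc, !pb_pair1, <- comp_assoc, pb_pair1, unit_nat. reflexivity.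
  - rewrite !comp_assoc, !pb_pair2, Hg. reflexivity.
Qed.

Lemma retract_inv {D C : Category} {L : Functor D C} {R : Functor C D}
  (A : Adjunction L R) (PB : Pullbacks D) (W : D) (s s' : SliceOb W)
  (Hc : slice_iso (LW L W (RW A PB W (LW L W s'))) (LW L W s') (counitW A PB W (LW L W s')))
  (u : hom (sdom s) (sdom s')) (w : hom (sdom s') (sdom s))
  (Hu : sarr s' ∘ u = sarr s) (Hw : sarr s ∘ w = sarr s') (Huw : u ∘ w = idm _) :
  slice_iso s (RW A PB W (LW L W s)) (unitW A PB W s) ->
  slice_iso s' (RW A PB W (LW L W s')) (unitW A PB W s').
Proof.
  intros [_ [i [Hi [Hiu _]]]].
  apply (retr_crit A PB W s' Hc (u ∘ i ∘ Pmap A PB W s' s w Hw)).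
  - rewrite <- comp_assoc, Pmap_nat, comp_assoc.
    rewrite <- (comp_assoc (unitW A PB W s) i u), Hiu, comp_idr. exact Huw.
  - rewrite !comp_assoc, Hu, Hi.
    exact (Pmap_pb2 A PB W s' s w Hw).
Qed.

Lemma uniqU {D C : Category} {L : Functor D C} {R : Functor C D}
  (A : Adjunction L R) (PB : Pullbacks D) (W : D) (s Y : SliceOb W)
  (Hc : slice_iso (LW L W (RW A PB W (LW L W s))) (LW L W s) (counitW A PB W (LW L W s)))
  (HY : slice_iso Y (RW A PB W (LW L W Y)) (unitW A PB W Y))
  (a b : hom (sdom (RW A PB W (LW L W s))) (sdom Y))
  (Ha : sarr Y ∘ a = sarr (RW A PB W (LW L W s)))
  (Hb : sarr Y ∘ b = sarr (RW A PB W (LW L W s)))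
  (E : a ∘ unitW A PB W s = b ∘ unitW A PB W s) : a = b.
Proof.
  destruct HY as [HuY [iY [_ [HiY _]]]].
  assert (H : unitW A PB W Y ∘ a = unitW A PB W Y ∘ b).
  { apply lemT.
    - rewrite !comp_assoc.
      change (sarr (RW A PB W (LW L W Y)) ∘ unitW A PB W Y ∘ a = sarr (RW A PB W (LW L W Y)) ∘ unitW A PB W Y ∘ b).
      rewrite HuY, Ha, Hb. reflexivity.
    - apply (cancelLu A PB W s Hc).
      transitivity (counitW A PB W (LW L W Y) ∘ fmap L ((unitW A PB W Y ∘ a) ∘ unitW A PB W s)).
      + rewrite (fmap_comp L (unitW A PB W s) (unitW A PB W Y ∘ a)), comp_assoc. reflexivity.
      + rewrite <- comp_assoc, E, comp_assoc.
        rewrite (fmap_comp L (unitW A PB W s) (unitW A PB W Y ∘ b)), comp_assoc. reflexivity. }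
  transitivity (iY ∘ (unitW A PB W Y ∘ a)).
  - rewrite comp_assoc, HiY, comp_idl. reflexivity.
  - rewrite H, comp_assoc, HiY, comp_idl. reflexivity.
Qed.

Definition pmap {D : Category} (P : BinProducts D) (W : D) {X Y : D} (a : hom X Y) :
  hom (prod P W X) (prod P W Y) := pairm P (pr1 P W X) (a ∘ pr2 P W X).

Lemma pmap_pr1 {D : Category} (P : BinProducts D) (W : D) {X Y : D} (a : hom X Y) :
  pr1 P W Y ∘ pmap P W a = pr1 P W X.
Proof. unfold pmap. apply pair_pr1. Qed.

Lemma pmap_retr {D : Category} (P : BinProducts D) (W : D) {X Y : D} (a : hom X Y) (b : hom Y X) :
  a ∘ b = idm Y -> pmap P W a ∘ pmap P W b = idm (prod P W Y).
Proof.
  intro E. transitivity (pairm P (pr1 P W Y) (pr2 P W Y)).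
  - apply pair_uniq.
    + rewrite comp_assoc, pmap_pr1, pmap_pr1. reflexivity.
    + unfold pmap. rewrite comp_assoc, pair_pr2, <- comp_assoc, pair_pr2, comp_assoc, E, comp_idl.
      reflexivity.
  - symmetry. apply pair_uniq; apply comp_idr.
Qed.

Lemma pairm_comp {D : Category} (P : BinProducts D) {Z X a b : D} (p : hom X a) (q : hom X b)
  (h : hom Z X) : pairm P p q ∘ h = pairm P (p ∘ h) (q ∘ h).
Proof.
  apply pair_uniq; rewrite comp_assoc; [rewrite pair_pr1 | rewrite pair_pr2]; reflexivity.
Qed.

Theorem lemma2p1 (D C : Category) (L : Functor D C) (R : Functor C D)
  (A : Adjunction L R) (CD : Cartesian D) (PB : Pullbacks D) (W : D)
  (Hcounit : forall t : SliceOb (fobj L W),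
      slice_iso (LW L W (RW A PB W t)) t (counitW A PB W t))
  (Hunit : forall t : SliceOb (fobj L W),
      let s := Wstar (cart_prod CD) W (sdom (RW A PB W t)) in
      slice_iso s (RW A PB W (LW L W s)) (unitW A PB W s)) :
  forall (V : D) (f : hom V W),
    let s := Wstar (cart_prod CD) W V in
    let sf := {| sdom := V; sarr := f |} : SliceOb W in
    slice_iso s (RW A PB W (LW L W s)) (unitW A PB W s) <->
    slice_iso sf (RW A PB W (LW L W sf)) (unitW A PB W sf).
Proof.
  intros V f s sf.
  set (P := cart_prod CD) in *.
  split.
  - intros [Hs [i [Hi [Hiu _]]]].
    (* W^*W is in the image *)
    set (t1 := {| sdom := fobj L W; sarr := idm (fobj L W) |} : SliceOb (fobj L W)).
    assert (Hq : fmap R (sarr t1) ∘ unit A W = unit A W ∘ idm W).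
    { simpl. rewrite fmap_id, comp_idl, comp_idr. reflexivity. }
    set (q := pb_pair PB Hq).
    assert (HYW : slice_iso (Wstar P W W) (RW A PB W (LW L W (Wstar P W W)))
                    (unitW A PB W (Wstar P W W))).
    { apply (retract_inv A PB W (Wstar P W (sdom (RW A PB W t1))) (Wstar P W W)
               (Hcounit _) (pmap P W (pb2 PB (fmap R (sarr t1)) (unit A W))) (pmap P W q)).
      - apply pmap_pr1.
      - apply pmap_pr1.
      - apply pmap_retr. unfold q. apply pb_pair2.
      - exact (Hunit t1). }
    set (g := pairm P f (idm V)).
    assert (Hg : sarr s ∘ g = sarr sf) by (apply pair_pr1).
    set (x := i ∘ Pmap A PB W sf s g Hg).
    assert (Hx1 : pr1 P W V ∘ x = sarr (RW A PB W (LW L W sf))).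
    { unfold x. rewrite comp_assoc. change (sarr s ∘ i ∘ Pmap A PB W sf s g Hg = sarr (RW A PB W (LW L W sf))).
      rewrite Hi. apply Pmap_pb2. }
    assert (Hxg : @comp D _ _ (prod P W V) x (unitW A PB W sf) = g).
    { unfold x. rewrite <- comp_assoc, Pmap_nat, comp_assoc, Hiu, comp_idl. reflexivity. }
    clearbody x.
    apply (retr_crit A PB W sf (Hcounit _) (pr2 P W V ∘ x)).
    + rewrite <- comp_assoc, Hxg. unfold g. apply pair_pr2.
    + assert (Hab : pairm P (pr1 P W V ∘ x) (f ∘ (pr2 P W V ∘ x))
                  = pairm P (pr1 P W V ∘ x) (pr1 P W V ∘ x)).
      { apply (uniqU A PB W sf (Wstar P W W) (Hcounit _) HYW).
        - simpl. rewrite pair_pr1. exact Hx1.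
        - simpl. rewrite pair_pr1. exact Hx1.
        - cbn [sdom Wstar]. rewrite !pairm_comp, <- !comp_assoc, Hxg. unfold g.
          rewrite pair_pr1, pair_pr2, comp_idr. reflexivity. }
      assert (E := f_equal (fun h => pr2 P W W ∘ h) Hab). simpl in E.
      rewrite !pair_pr2 in E. simpl. rewrite E. exact Hx1.
  - intros [_ [j [Hj [Hju _]]]].
    apply (retract_inv A PB W (Wstar P W (sdom (RW A PB W (LW L W sf)))) s
             (Hcounit _) (pmap P W j) (pmap P W (unitW A PB W sf))).
    + apply pmap_pr1.
    + apply pmap_pr1.
    + apply pmap_retr. exact Hju.
    + exact (Hunit (LW L W sf)).
Qed.
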